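(* Let $p$ be analytic in $\mathbb{D}$ with $p(0)=1$ and let $Q\in\mathcal{P}$. Suppose that $\alpha\geq 0$, $\beta>0$ and that $p$ satisfies $$p(z)Q(z)+\frac{zp'(z)}{\beta p(z)+\alpha}=1\qquad(z\in\mathbb{D}).$$ Then $\operatorname{Re}p(z)>0$ for all $z\in\mathbb{D}$.
   Context: $\mathbb{D}$ is the open unit disk. $\mathcal{P}$ (the Carathéodory class) is the class of analytic functions $q(z)=1+c_1z+c_2z^2+\cdots$ in $\mathbb{D}$ with $\operatorname{Re}q(z)>0$ for all $z\in\mathbb{D}$. *)

(* Defs.v *)
From Stdlib Require Import Reals.
From Coquelicot Require Import Coquelicot.

Open Scope C_scope.

Definition unit_disk (z : C) : Prop := (Cmod z < 1)%R.

Definition has_cderiv (f : C -> C) (z l : C) : Prop :=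
  @is_derive C_AbsRing C_NormedModule f z l.

Definition analytic_in_D (f : C -> C) : Prop :=
  forall z : C, unit_disk z -> @ex_derive C_AbsRing C_NormedModule f z.

Definition caratheodory (q : C -> C) : Prop :=
  analytic_in_D q /\ q 0 = 1 /\
  forall z : C, unit_disk z -> (0 < Re (q z))%R.

(* Main.v *)
Require Import Defs.
From Stdlib Require Import Reals Lra Psatz Classical ClassicalEpsilon.
From Coquelicot Require Import Coquelicot.
Open Scope C_scope.

Lemma small_step (c : C) (s : R) : (Re c < 0)%R -> (0 < s)%R ->
  (s * (Re c ^ 2 + Im c ^ 2) < -2 * Re c)%R -> (Cmod (1 + RtoC s * c) < 1)%R.
Proof.
  intros Hc Hs Hlt.
  pose proof (Cmod_ge_0 (1 + RtoC s * c)) as H0.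
  pose proof (Cmod2_alt (1 + RtoC s * c)) as H2.
  assert (Hsq : (Cmod (1 + RtoC s * c) ^ 2 < 1)%R).
  { rewrite H2. destruct c as [c1 c2]; simpl in *. nra. }
  nra.
Qed.

Lemma three_pos (a b c : R) : (0 < a)%R -> (0 < b)%R -> (0 < c)%R ->
  exists s, (0 < s /\ s < a /\ s < b /\ s < c)%R.
Proof.
  intros. exists (Rmin a (Rmin b c) / 2)%R.
  unfold Rmin; repeat destruct Rle_dec; lra.
Qed.

Lemma Re_scal (s : R) (w : C) : Re (RtoC s * w) = (s * Re w)%R.
Proof. destruct w; simpl; ring. Qed.

Lemma deriv_est (f : C -> C) (z d : C) : has_cderiv f z d ->
  forall eps : R, (0 < eps)%R -> exists del : R, (0 < del)%R /\
  forall h : C, (Cmod h < del)%R -> (Cmod (f (z + h) - f z - h * d)%C <= eps * Cmod h)%R.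
Proof.
  intros [_ H] eps Heps.
  specialize (H z (fun P HP => HP) (mkposreal eps Heps)).
  destruct H as [del Hdel].
  exists del; split; [apply cond_pos|].
  intros h Hh.
  specialize (Hdel (z + h)).
  unfold ball, norm, minus, plus, opp, scal in Hdel; simpl in Hdel.
  unfold AbsRing_ball, abs, minus, plus, opp, mult in Hdel; simpl in Hdel.
  replace (z + h + - z) with h in Hdel by ring.
  replace (f (z + h) - f z - h * d) with (f (z + h) + - f z + - (h * d)) by ring.
  apply Hdel. exact Hh.
Qed.

Lemma dir_core (p : C -> C) (z0 d : C) (H : has_cderiv p z0 d)
  (Hin : forall z, (Cmod z < Cmod z0)%R -> (0 < Re (p z))%R) (Hz : (0 < Cmod z0)%R)
  (c : C) (Hc : (Re c < 0)%R) (eps : R) (Heps : (0 < eps)%R) :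
  exists s0, (0 < s0)%R /\ forall s, (0 < s < s0)%R ->
    (0 < Re (p z0) + s * Re (c * (z0 * d)) + eps * s * Cmod (z0 * c))%R.
Proof.
  destruct (deriv_est p z0 d H eps Heps) as [del [Hdel Hest]].
  pose proof (Cmod_ge_0 (z0 * c)) as Hm.
  exists (Rmin (-2 * Re c / (Re c ^ 2 + Im c ^ 2 + 1)) (del / (Cmod (z0 * c) + 1)))%R.
  assert (Hq : (0 < Re c ^ 2 + Im c ^ 2 + 1)%R) by nra.
  split.
  { apply Rmin_glb_lt; apply Rdiv_lt_0_compat; lra. }
  intros s [Hs0 Hs1].
  assert (Hs2 : (s < -2 * Re c / (Re c ^ 2 + Im c ^ 2 + 1))%R)
    by (eapply Rlt_le_trans; [exact Hs1| apply Rmin_l]).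
  assert (Hs3 : (s < del / (Cmod (z0 * c) + 1))%R)
    by (eapply Rlt_le_trans; [exact Hs1| apply Rmin_r]).
  apply Rlt_div_r in Hs2; [|lra].
  apply Rlt_div_r in Hs3; [|lra].
  set (h := RtoC s * (z0 * c)).
  assert (Hh : Cmod h = (s * Cmod (z0 * c))%R).
  { unfold h. rewrite Cmod_mult, Cmod_R, Rabs_pos_eq; lra. }
  assert (Hin' : (0 < Re (p (z0 + h)%C))%R).
  { apply Hin.
    replace (z0 + h)%C with (z0 * (1 + RtoC s * c))%C by (unfold h; ring).
    rewrite Cmod_mult.
    assert (Hsm : (Cmod (1 + RtoC s * c) < 1)%R) by (apply small_step; nra).
    nra. }
  assert (HE := Hest h ltac:(rewrite Hh; nra)).
  rewrite Hh in HE.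
  pose proof (re_le_Cmod (p (z0 + h) - p z0 - h * d)) as Hre.
  assert (Hdec : Re (p (z0 + h)%C) = (Re (p z0) + s * Re (c * (z0 * d))%C + Re (p (z0 + h) - p z0 - h * d)%C)%R).
  { replace (c * (z0 * d))%C with (z0 * c * d)%C by ring.
    rewrite <- Re_scal.
    replace (h * d)%C with (RtoC s * (z0 * c * d))%C by (unfold h; ring).
    destruct (p (z0 + h)%C), (p z0), (z0 * c * d)%C. simpl. ring. }

  pose proof (Rle_abs (Re (p (z0 + h) - p z0 - h * d)%C)).
  nra.
Qed.

Lemma no_neg_dir (p : C -> C) (z0 d : C) (H : has_cderiv p z0 d)
  (Hin : forall z, (Cmod z < Cmod z0)%R -> (0 < Re (p z))%R) (Hz : (0 < Cmod z0)%R)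
  (HA : (Re (p z0) <= 0)%R) (c : C) (Hc : (Re c < 0)%R) :
  (0 <= Re (c * (z0 * d)))%R.
Proof.
  destruct (Rle_or_lt 0 (Re (c * (z0 * d)))) as [|Hk]; [assumption|exfalso].
  set (k := Re (c * (z0 * d))) in *.
  set (m := Cmod (z0 * c)).
  assert (Hm : (0 <= m)%R) by apply Cmod_ge_0.
  destruct (dir_core p z0 d H Hin Hz c Hc (- k / (2 * (m + 1))) ltac:(apply Rdiv_lt_0_compat; lra))
    as [s0 [Hs0 Hs]].
  specialize (Hs (s0 / 2)%R ltac:(lra)). fold k m in Hs.
  assert (Hem : (- k / (2 * (m + 1)) * m <= - k / 2)%R).
  { apply (Rmult_le_reg_r (2 * (m + 1))). lra.
    field_simplify; [|lra]. nra. }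
  nra.
Qed.

Lemma jack (p : C -> C) (z0 d : C) (H : has_cderiv p z0 d)
  (Hin : forall z, (Cmod z < Cmod z0)%R -> (0 < Re (p z))%R) (Hz : (0 < Cmod z0)%R)
  (HA : (Re (p z0) <= 0)%R) :
  Re (p z0) = 0%R /\ Im (z0 * d) = 0%R /\ (Re (z0 * d) <= 0)%R.
Proof.
  assert (HA0 : (0 <= Re (p z0))%R).
  { destruct (Rle_or_lt 0 (Re (p z0))) as [|HA1]; [assumption|exfalso].
    set (c := RtoC (-1)).
    assert (Hc : (Re c < 0)%R) by (simpl; lra).
    destruct (dir_core p z0 d H Hin Hz c Hc 1 Rlt_0_1) as [s0 [Hs0 Hs]].
    set (K := (Cmod (c * (z0 * d)) + Cmod (z0 * c) + 1)%R).
    assert (HK : (1 <= K)%R) by (unfold K; pose proof (Cmod_ge_0 (c * (z0 * d))); pose proof (Cmod_ge_0 (z0 * c)); lra).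
    destruct (three_pos s0 (- Re (p z0) / K) 1 Hs0 ltac:(apply Rdiv_lt_0_compat; lra) Rlt_0_1)
      as [s [Hs1 [Hs2 [Hs3 _]]]].
    specialize (Hs s ltac:(lra)).
    apply Rlt_div_r in Hs3; [|lra].
    pose proof (re_le_Cmod (c * (z0 * d))).
    pose proof (Rle_abs (Re (c * (z0 * d)))).
    unfold K in Hs3. nra. }
  assert (HA' : Re (p z0) = 0%R) by lra.
  split; [exact HA'|].
  assert (Hre : (Re (z0 * d) <= 0)%R).
  { pose proof (no_neg_dir p z0 d H Hin Hz HA (RtoC (-1)) ltac:(simpl; lra)) as X.
    destruct (z0 * d)%C as [a b]. simpl in *. lra. }
  split; [|exact Hre].
  destruct (Req_dec (Im (z0 * d)) 0) as [|Hb]; [assumption|exfalso].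
  destruct (z0 * d)%C as [a b] eqn:Ez. simpl in Hre, Hb.
  set (e := (b ^ 2 / (1 - a))%R).
  assert (He : (0 < e)%R) by (unfold e; apply Rdiv_lt_0_compat; [nra|lra]).
  pose proof (no_neg_dir p z0 d H Hin Hz HA (- e, b)%R ltac:(simpl; lra)) as X.
  rewrite Ez in X. simpl in X.
  assert (Hea : (e * (1 - a) = b ^ 2)%R) by (unfold e; field; lra).
  nra.
Qed.

Lemma Cmod_le_sum (w : C) : (Cmod w <= Rabs (Re w) + Rabs (Im w))%R.
Proof.
  pose proof (Cmod2_alt w) as E. pose proof (Cmod_ge_0 w).
  pose proof (pow2_abs (Re w)). pose proof (pow2_abs (Im w)).
  pose proof (Rabs_pos (Re w)). pose proof (Rabs_pos (Im w)).
  nra.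
Qed.

Lemma cont_pos (p : C -> C) (t d : C) (H : has_cderiv p t d) (Hpos : (0 < Re (p t))%R) :
  exists del, (0 < del)%R /\ forall z : C,
    (Rabs (Re z - Re t) < del)%R -> (Rabs (Im z - Im t) < del)%R -> (0 < Re (p z))%R.
Proof.
  destruct (deriv_est p t d H 1 Rlt_0_1) as [del [Hdel Hest]].
  pose proof (Cmod_ge_0 d).
  set (e := Rmin del (Re (p t) / (Cmod d + 2))).
  assert (He : (0 < e)%R) by (apply Rmin_glb_lt; [lra| apply Rdiv_lt_0_compat; lra]).
  exists (e / 2)%R; split; [lra|].
  intros z Hx Hy.
  set (h := (z - t)%C).
  assert (Hh : (Cmod h < e)%R).
  { pose proof (Cmod_le_sum h) as X.
    replace (Re h) with (Re z - Re t)%R in X by (unfold h; destruct z, t; simpl; ring).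
    replace (Im h) with (Im z - Im t)%R in X by (unfold h; destruct z, t; simpl; ring).
    unfold e in *. lra. }
  assert (Hh1 : (Cmod h < del)%R) by (eapply Rlt_le_trans; [exact Hh|apply Rmin_l]).
  assert (Hh2 : (Cmod h < Re (p t) / (Cmod d + 2))%R) by (eapply Rlt_le_trans; [exact Hh|apply Rmin_r]).
  apply Rlt_div_r in Hh2; [|lra].
  specialize (Hest h Hh1).
  replace (t + h)%C with z in Hest by (unfold h; ring).
  pose proof (re_le_Cmod (p z - p t - h * d)%C).
  pose proof (Rle_abs (- Re (p z - p t - h * d)%C)).
  pose proof (re_le_Cmod (h * d)%C).
  pose proof (Rle_abs (- Re (h * d)%C)).
  rewrite Rabs_Ropp in *.
  rewrite Cmod_mult in *.
  pose proof (Cmod_ge_0 h).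
  assert (Hdec : Re (p z) = (Re (p t) + Re (h * d)%C + Re (p z - p t - h * d)%C)%R).
  { destruct (p z), (p t), (h * d)%C. simpl. ring. }
  nra.
Qed.

Lemma exists_min (p : C -> C)
  (Hc : forall t : C, (Cmod t < 1)%R -> (0 < Re (p t))%R -> exists del, (0 < del)%R /\
     forall z : C, (Rabs (Re z - Re t) < del)%R -> (Rabs (Im z - Im t) < del)%R -> (0 < Re (p z))%R)
  (z1 : C) (H1 : (Cmod z1 < 1)%R) (Hn : (Re (p z1) <= 0)%R) :
  exists z0, (Cmod z0 < 1)%R /\ (Re (p z0) <= 0)%R /\
    forall z, (Cmod z < Cmod z0)%R -> (0 < Re (p z))%R.
Proof.
  set (R1 := Cmod z1). assert (HR1 : (R1 < 1)%R) by exact H1.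
  set (E := fun r => (r <= R1)%R /\ forall z, (Cmod z < r)%R -> (0 < Re (p z))%R).
  assert (HE0 : E 0%R).
  { split. apply Cmod_ge_0. intros z Hz. pose proof (Cmod_ge_0 z). lra. }
  assert (Hb : bound E) by (exists R1; intros r [Hr _]; exact Hr).
  destruct (completeness E Hb (ex_intro _ _ HE0)) as [r0 [Hub Hlub]].
  assert (Hr0 : (0 <= r0)%R) by (apply Hub; exact HE0).
  assert (Hr1 : (r0 <= R1)%R) by (apply Hlub; intros r [Hr _]; exact Hr).
  assert (HA : forall z, (Cmod z < r0)%R -> (0 < Re (p z))%R).
  { intros z Hz. destruct (Rlt_or_le 0 (Re (p z))) as [|Hz2]; [assumption|exfalso].
    assert (r0 <= Cmod z)%R; [|lra].
    apply Hlub. intros r [_ Hr]. destruct (Rle_or_lt r (Cmod z)); [assumption|].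
    specialize (Hr z ltac:(assumption)). lra. }
  assert (HB : forall eps, (0 < eps)%R -> exists z, (Cmod z < r0 + eps)%R /\ (Cmod z < 1)%R /\ (Re (p z) <= 0)%R).
  { intros eps Heps. destruct (Rlt_or_le R1 (r0 + eps)) as [Hl|Hl].
    - exists z1. repeat split; auto.
    - apply NNPP. intro Hno.
      assert (E (r0 + eps)%R).
      { split; [exact Hl|]. intros z Hz.
        destruct (Rlt_or_le 0 (Re (p z))) as [|Hz2]; [assumption|exfalso].
        apply Hno. exists z. repeat split; auto. all: lra. }
      assert (r0 + eps <= r0)%R by (apply Hub; assumption). lra. }
  apply NNPP. intro Hno.
  assert (Hpos : forall z, (Cmod z <= r0)%R -> (0 < Re (p z))%R).
  { intros z Hz. destruct (Rlt_or_le 0 (Re (p z))) as [|Hz2]; [assumption|exfalso].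
    apply Hno. exists z. repeat split; auto; try lra.
    intros w Hw. apply HA. lra. }
  assert (Hex : forall u v : R, exists del : posreal, forall z : C,
     (Rabs (Re z - u) < del)%R -> (Rabs (Im z - v) < del)%R -> (Cmod z < 1)%R ->
     (Re (p z) <= 0)%R -> (r0 + del <= Cmod z)%R).
  { intros u v. destruct (Rle_or_lt (Cmod (u, v)) r0) as [Ht|Ht].
    - destruct (Hc (u, v) ltac:(lra) (Hpos _ Ht)) as [del [Hdel Hd]].
      exists (mkposreal del Hdel). intros z Hx Hy _ Hz. simpl in *.
      specialize (Hd z Hx Hy). lra.
    - assert (Hq : (0 < (Cmod (u, v) - r0) / 4)%R) by lra.
      exists (mkposreal _ Hq). intros z Hx Hy _ _. simpl in *.
      pose (t := (u, v) : C). change (u, v) with t in Ht |- *.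
      pose proof (Cmod_le_sum (t - z)%C) as X.
      replace (Re (t - z)%C) with (- (Re z - u))%R in X by (destruct z; simpl; ring).
      replace (Im (t - z)%C) with (- (Im z - v))%R in X by (destruct z; simpl; ring).
      rewrite !Rabs_Ropp in X.
      pose proof (Cmod_triangle z (t - z)%C) as T.
      replace (z + (t - z))%C with t in T by ring.
      change (Cmod (u, v)) with (Cmod t) in *. lra. }
  set (delta := fun u v => proj1_sig (constructive_indefinite_description _ (Hex u v))).
  assert (Hdelta : forall u v z,
     (Rabs (Re z - u) < delta u v)%R -> (Rabs (Im z - v) < delta u v)%R -> (Cmod z < 1)%R ->
     (Re (p z) <= 0)%R -> (r0 + delta u v <= Cmod z)%R).
  { intros u v. unfold delta. destruct (constructive_indefinite_description _ (Hex u v)) as [x Hx].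
    exact Hx. }
  destruct (compactness_value_2d (-1) 1 (-1) 1 delta) as [d Hd].
  destruct (HB d (cond_pos d)) as [z [Hz1 [Hz2 Hz3]]].
  pose proof (re_le_Cmod z) as Xr. pose proof (Rmax_Cmod z) as Xm.
  pose proof (Rmax_r (Rabs (fst z)) (Rabs (snd z))) as Xi.
  apply (Hd (Re z) (Im z)).
  { apply Rabs_le_between. lra. }
  { apply Rabs_le_between. unfold Im. lra. }
  intros [u [v [_ [_ [Hu [Hv Hdu]]]]]].
  specialize (Hdelta u v z Hu Hv Hz2 Hz3). lra.
Qed.

Theorem mainTheorem4 (p dp Q : C -> C) (alpha beta : R)
  (hp : forall z : C, unit_disk z -> has_cderiv p z (dp z))
  (hp0 : p 0 = 1)
  (hQ : caratheodory Q)
  (halpha : (0 <= alpha)%R) (hbeta : (0 < beta)%R)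
  (hden : forall z : C, unit_disk z -> RtoC beta * p z + RtoC alpha <> 0)
  (heq : forall z : C, unit_disk z ->
     p z * Q z + z * dp z / (RtoC beta * p z + RtoC alpha) = 1) :
  forall z : C, unit_disk z -> (0 < Re (p z))%R.
Proof.
  intros z1 Hz1.
  destruct (Rlt_or_le 0 (Re (p z1))) as [|Hn]; [assumption|exfalso].
  destruct (exists_min p (fun t Ht Hpos => cont_pos p t (dp t) (hp t Ht) Hpos) z1 Hz1 Hn)
    as [z0 [Hz0 [Hn0 Hin]]].
  assert (Hpos0 : (0 < Cmod z0)%R).
  { destruct (Req_dec (Cmod z0) 0) as [E|E].
    - apply Cmod_eq_0 in E. subst z0. rewrite hp0 in Hn0. simpl in Hn0. lra.
    - pose proof (Cmod_ge_0 z0). lra. }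
  destruct (jack p z0 (dp z0) (hp z0 Hz0) Hin Hpos0 Hn0) as [Hre [Him Hx]].
  destruct hQ as [_ [_ HQ]].
  specialize (HQ z0 Hz0).
  specialize (hden z0 Hz0).
  assert (E2 : (p z0 * Q z0 * (RtoC beta * p z0 + RtoC alpha) + z0 * dp z0 =
                RtoC beta * p z0 + RtoC alpha)%C).
  { transitivity ((p z0 * Q z0 + z0 * dp z0 / (RtoC beta * p z0 + RtoC alpha)) * (RtoC beta * p z0 + RtoC alpha))%C.
    - field. exact hden.
    - rewrite (heq z0 Hz0). ring. }
  revert E2 hden Hre Him Hx HQ.
  generalize (z0 * dp z0)%C (p z0) (Q z0).
  intros [x y] [a b] [q1 q2] E2 hden Hre Him Hx HQ.
  simpl in Hre, Him, Hx, HQ. subst a y.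
  pose proof (f_equal fst E2) as F1. pose proof (f_equal snd E2) as F2.
  simpl in F1, F2.
  destruct (Req_dec b 0) as [Hb|Hb].
  - subst b. apply hden. apply injective_projections; simpl; nra.
  - assert (F2' : (q1 * alpha - q2 * beta * b = beta)%R).
    { apply (Rmult_eq_reg_l b); [|exact Hb]. nra. }
    assert (K : (beta * x = q1 * (alpha ^ 2 + b ^ 2 * beta ^ 2))%R).
    { assert (F1' : (- b * q2 * alpha - b ^ 2 * q1 * beta + x = alpha)%R) by nra.
      assert (G : (b * q2 * beta = q1 * alpha - beta)%R) by nra.
      nra. }
    assert (Hb2 : (0 < b ^ 2)%R) by (apply pow2_gt_0; exact Hb).
    assert (0 < q1 * (alpha ^ 2 + b ^ 2 * beta ^ 2))%R.
    { apply Rmult_lt_0_compat; [exact HQ|].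
      assert (0 < b ^ 2 * beta ^ 2)%R by (apply Rmult_lt_0_compat; [exact Hb2| apply pow2_gt_0; lra]).
      pose proof (pow2_ge_0 alpha). lra. }
    nra.
Qed.
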